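(* Let $a,b\ge1$ be integers. Let $\mathcal{C}$ be a chain with spine $P=v_0,\dots,v_m$ and arc partition $A(P)=A_1\cup A_2$, and suppose $|A_2|\ge a(b+1)-1$. Then $\mathcal{C}$ contains a strong $(a,b)$-alternating-path $R$ with $s_1(R)=v_0$ and $t_a(R)=v_m$.
   Context: Fix $b\ge1$ and $g:=4b^2$. Gadgets have designated vertices $p,q$ with arc $(p,q)$. Type I: a directed cycle of length at least $g$ through $(p,q)$. Basic type II: vertices $p,q,r$ and a directed path $P_1$ from $r$ to $p$ of length at least $2b^2+b-2$, $q\notin V(P_1)$, every vertex of $P_1$ having an arc to $q$. Type III: vertices $p,q,r$, the arc $(p,q)$, and two internally vertex-disjoint directed paths $P_1,P_2$ from $p$ and from $q$ respectively to $r$, each of length at least $2b-1$. A trivial gadget consists only of $p,q$ and the arc $(p,q)$. A chain $\mathcal{C}$ consists of a directed path $P=v_0,\dots,v_m$ (the spine), a partition $A_1\cup A_2$ of its arc set, and non-trivial gadgets $(G_e)_{e\in A_2}$ such that: each $G_e$ is of type I, type III, or basic type II; for $e=(v_i,v_{i+1})\in A_2$, $p(G_e)=v_i$, $q(G_e)=v_{i+1}$ and $V(G_e)\cap\{v_0,\dots,v_m\}=\{v_i,v_{i+1}\}$; and $V(G_e)\cap V(G_f)\subseteq\{v_0,\dots,v_m\}$ for distinct $e,f\in A_2$. The chain is identified with the digraph $P\cup\bigcup_{e\in A_2}G_e$. An $(a,b)$-alternating-path is an oriented path $R$ consisting of vertices $s_1,\dots,s_a,t_1,\dots,t_a$ and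 pairwise internally vertex-disjoint directed paths $Q_1,\dots,Q_a,Q'_1,\dots,Q'_{a-1}$, $Q_i$ from $s_i$ to $t_i$, $Q'_i$ from $s_{i+1}$ to $t_i$, with $Q_2,\dots,Q_{a-1},Q'_1,\dots,Q'_{a-1}$ of length at least $b$; it is strong if also $Q_1$ and $Q_a$ have length at least $b$. *)

(* Defs.v *)
From mathcomp Require Import all_boot.
Set Implicit Arguments. Unset Strict Implicit. Unset Printing Implicit Defensive.

Section Defs.
Variable V : finType.

Definition arcs_of (s : seq V) : {set V * V} := [set e in zip s (behead s)].

Definition dpath (A : {set V * V}) (x y : V) (P : seq V) : Prop :=
  exists P' : seq V, [/\ P = x :: P', last x P' = y, uniq P &
                         path (fun u v => (u, v) \in A) x P'].

Definition plen (P : seq V) : nat := (size P).-1.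

(* Type I gadget: exactly a directed cycle q = c_0 -> c_1 -> ... -> c_{k-1} = p -> q
   of length k >= g = 4 b^2 (so it passes through the arc (p,q)). *)
Definition gadget_I (b : nat) (VG : {set V}) (AG : {set V * V}) (p q : V) : Prop :=
  exists c' : seq V,
    [/\ uniq (q :: c'), last q c' = p, 4 * b ^ 2 <= size (q :: c'),
        VG = [set x in q :: c'] & AG = arcs_of (rcons (q :: c') q)].

Definition gadget_II (b : nat) (VG : {set V}) (AG : {set V * V}) (p q : V) : Prop :=
  exists (r : V) (P1 : seq V),
    [/\ dpath (arcs_of P1) r p P1, 2 * b ^ 2 + b - 2 <= plen P1, q \notin P1,
        VG = q |: [set x in P1] &
        AG = arcs_of P1 :|: [set (x, q) | x in P1]].

Definition gadget_III (b : nat) (VG : {set V}) (AG : {set V * V}) (p q : V) : Prop :=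
  exists (r : V) (P1 P2 : seq V),
    [/\ p != q /\ dpath (arcs_of P1) p r P1 /\ dpath (arcs_of P2) q r P2,
        [set x in P1] :&: [set x in P2] = [set r],
        2 * b - 1 <= plen P1 /\ 2 * b - 1 <= plen P2,
        VG = [set x in P1] :|: [set x in P2] &
        AG = (p, q) |: (arcs_of P1 :|: arcs_of P2)].

(* A chain with spine v0 :: vs = v_0, ..., v_m, A2 the set of arcs carrying
   a gadget (A1 is the complement in the spine's arc set), gadget G_e given by
   vertex set VG e and arc set AG e, with p(G_e) = e.1, q(G_e) = e.2. *)
Definition is_chain (b : nat) (v0 : V) (vs : seq V) (A2 : {set V * V})
    (VG : V * V -> {set V}) (AG : V * V -> {set V * V}) : Prop :=
  [/\ uniq (v0 :: vs),
      A2 \subset arcs_of (v0 :: vs),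
      (forall e, e \in A2 ->
         [set x in v0 :: vs] :&: VG e = [set e.1; e.2] /\
         [\/ gadget_I b (VG e) (AG e) e.1 e.2,
             gadget_II b (VG e) (AG e) e.1 e.2 |
             gadget_III b (VG e) (AG e) e.1 e.2]) &
      (forall e f, e \in A2 -> f \in A2 -> e != f ->
         VG e :&: VG f \subset [set x in v0 :: vs])].

Definition chain_arcs (v0 : V) (vs : seq V) (A2 : {set V * V})
    (AG : V * V -> {set V * V}) : {set V * V} :=
  arcs_of (v0 :: vs) :|: \bigcup_(e in A2) AG e.

(* The vertex sequence of the oriented path
   R = s_1 Q_1 t_1 (Q'_1)^{-1} s_2 Q_2 t_2 ... s_a Q_a t_a   (0-based indices). *)
Definition alt_vertices (a : nat) (Q Q' : nat -> seq V) : seq V :=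
  Q 0 ++ flatten [seq behead (rev (Q' i)) ++ behead (Q i.+1) | i <- iota 0 a.-1].

(* (a,b)-alternating path in the digraph with arc set A (0-based indices:
   s_i = s (i-1), Q_i = Q (i-1), Q'_i = Q' (i-1)). R being an oriented path
   is expressed by all its vertices being distinct (which in particular makes
   the Q's and Q''s pairwise internally vertex-disjoint). *)
Definition alt_path (A : {set V * V}) (a b : nat) (s t : nat -> V)
    (Q Q' : nat -> seq V) : Prop :=
  [/\ forall i, i < a -> dpath A (s i) (t i) (Q i),
      forall i, i.+1 < a -> dpath A (s i.+1) (t i) (Q' i),
      forall i, 0 < i -> i.+1 < a -> b <= plen (Q i),
      forall i, i.+1 < a -> b <= plen (Q' i) &
      uniq (alt_vertices a Q Q')].

Definition strong_alt_path (A : {set V * V}) (a b : nat) (s t : nat -> V)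
    (Q Q' : nat -> seq V) : Prop :=
  [/\ alt_path A a b s t Q Q', b <= plen (Q 0) & b <= plen (Q a.-1)].

End Defs.

(* Main.v *)
Require Import Defs.
From mathcomp Require Import all_boot zify.
Set Implicit Arguments. Unset Strict Implicit. Unset Printing Implicit Defensive.


Section Aux.
Variable V : finType.
Implicit Types (s : seq V) (A : {set V * V}).

Lemma arcs_of_nil : arcs_of [::] = set0 :> {set V * V}.
Proof. by apply/setP => e; rewrite !inE. Qed.

Lemma arcs_of1 (x : V) : arcs_of [:: x] = set0.
Proof. by apply/setP => e; rewrite !inE. Qed.

Lemma arcs_of_cons2 (x y : V) s : arcs_of (x :: y :: s) = (x, y) |: arcs_of (y :: s).
Proof. by apply/setP => e; rewrite !inE. Qed.

Lemma arcs_of_consS (x : V) s : arcs_of s \subset arcs_of (x :: s).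
Proof.
case: s => [|y s]; first by rewrite arcs_of_nil sub0set.
by rewrite arcs_of_cons2 subsetUr.
Qed.

Lemma arcs_of_catr s1 s2 : arcs_of s2 \subset arcs_of (s1 ++ s2).
Proof.
elim: s1 => [|x s1 IH] //=; apply: subset_trans IH _; exact: arcs_of_consS.
Qed.

Lemma arcs_of_catl s1 s2 : arcs_of s1 \subset arcs_of (s1 ++ s2).
Proof.
elim: s1 => [|x s1 IH]; first by rewrite arcs_of_nil sub0set.
case: s1 IH => [|y s1] IH; first by rewrite arcs_of1 sub0set.
by rewrite /= !arcs_of_cons2 setUS.
Qed.

Lemma arcs_of_mem s e : e \in arcs_of s -> e.1 \in s /\ e.2 \in s.
Proof.
elim: s => [|x s IH]; first by rewrite arcs_of_nil inE.
case: s IH => [|y s] IH; first by rewrite arcs_of1 inE.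
rewrite arcs_of_cons2 in_setU1 => /orP [/eqP -> | /IH [h1 h2]].
  by rewrite /= !inE !eqxx orbT.
by split; rewrite in_cons ?h1 ?h2 orbT.
Qed.

Lemma path_arcs (x : V) s : path (fun u v => (u, v) \in arcs_of (x :: s)) x s.
Proof.
elim: s x => [|y s IH] x //=.
rewrite arcs_of_cons2 setU11 /=.
apply: sub_path (IH y) => u v /= h.
by rewrite in_setU1 h orbT.
Qed.

Lemma dpath_mono A (B : {set V * V}) (x y : V) P : A \subset B -> dpath A x y P -> dpath B x y P.
Proof.
move=> /subsetP AB [P' [-> h1 h2 h3]]; exists P'; split => //.
by apply: sub_path h3 => u v /= /AB.
Qed.

Lemma dpath_head A (x y : V) P : dpath A x y P -> P = x :: behead P.
Proof. by case=> P' [-> _ _ _]. Qed.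

Lemma dpath_last A (x y : V) P : dpath A x y P -> last x (behead P) = y.
Proof. by case=> P' [-> h _ _]. Qed.

Lemma dpath_uniq A (x y : V) P : dpath A x y P -> uniq P.
Proof. by case=> P' [-> _ h _]. Qed.

Lemma dpath1 A (x : V) : dpath A x x [:: x].
Proof. by exists [::]. Qed.

Lemma dpath_cons A (x y z : V) P :
  (x, y) \in A -> x \notin P -> dpath A y z P -> dpath A x z (x :: P).
Proof.
move=> hxy hx [P' [eP hl hu hp]]; subst P; exists (y :: P'); split => //.
- by rewrite /= hx; move: hu => /= ->.
- by rewrite /= hxy.
Qed.

Lemma rev_last (x : V) s : rev (x :: s) = last x s :: behead (rev (x :: s)).
Proof. by rewrite lastI rev_rcons. Qed.

Lemma uniq_catx (G L : seq V) (x : V) :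
  uniq G -> uniq (x :: L) -> (forall y, y \in G -> y \in x :: L -> y = x) ->
  uniq (G ++ L).
Proof.
move=> uG /= /andP [xL uL] h; rewrite cat_uniq uG uL andbT.
apply/hasPn => y yL; apply/negP => yG.
have := h y yG; rewrite in_cons yL orbT => /(_ isT) eyx.
by rewrite -eyx yL in xL.
Qed.

End Aux.


Section Alt.
Variable V : finType.
Implicit Types (A : {set V * V}).

Definition cons_fn (X : Type) (x : X) (f : nat -> X) (i : nat) : X :=
  match i with 0 => x | j.+1 => f j end.

Definition altF (a : nat) (Q Q' : nat -> seq V) : seq V :=
  flatten [seq behead (rev (Q' i)) ++ behead (Q i.+1) | i <- iota 0 a.-1].

Lemma altE a (Q Q' : nat -> seq V) : alt_vertices a Q Q' = Q 0 ++ altF a Q Q'.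
Proof. by []. Qed.

Lemma map_iotaS (T : Type) (f : nat -> T) m n :
  map f (iota m.+1 n) = map (fun i => f i.+1) (iota m n).
Proof. by elim: n m => [|n IH] m //=; rewrite IH. Qed.

Lemma altF_cons a (Q Q' : nat -> seq V) Q0 Q1 Q'0 : 0 < a ->
  altF a.+1 (cons_fn Q0 (cons_fn Q1 (fun j => Q j.+1))) (cons_fn Q'0 Q') =
  (behead (rev Q'0) ++ behead Q1) ++ altF a Q Q'.
Proof.
case: a => [|a] // _; rewrite /altF /=; congr (_ ++ _).
by rewrite map_iotaS.
Qed.

Lemma alt_mono A (B : {set V * V}) a b s t (Q Q' : nat -> seq V) :
  A \subset B -> alt_path A a b s t Q Q' -> alt_path B a b s t Q Q'.
Proof.
move=> AB [h1 h2 h3 h4 h5]; split => // i hi.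
- exact: dpath_mono AB (h1 i hi).
- exact: dpath_mono AB (h2 i hi).
Qed.

Lemma alt_combine A a b s t (Q Q' : nat -> seq V) x0 S1 T0 Q0 Q'0 Q1 :
  0 < a -> alt_path A a b s t Q Q' ->
  dpath A x0 T0 Q0 -> dpath A S1 T0 Q'0 -> b <= plen Q'0 ->
  dpath A S1 (t 0) Q1 -> b <= plen Q1 ->
  uniq (Q0 ++ (behead (rev Q'0) ++ behead Q1) ++ altF a Q Q') ->
  alt_path A a.+1 b (cons_fn x0 (cons_fn S1 (fun j => s j.+1))) (cons_fn T0 t)
    (cons_fn Q0 (cons_fn Q1 (fun j => Q j.+1))) (cons_fn Q'0 Q').
Proof.
move=> a0 [h1 h2 h3 h4 h5] d0 d'0 l'0 d1 l1 u.
split.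
- by move=> [|[|i]] hi //=; apply: h1.
- by move=> [|i] hi //=; apply: h2.
- by move=> [|[|i]] hi0 hi //=; apply: h3.
- by move=> [|i] hi //=; apply: h4.
- by rewrite altE altF_cons.
Qed.

Lemma alt_prepend A a b s t (Q Q' : nat -> seq V) x :
  0 < a -> alt_path A a b s t Q Q' -> (x, s 0) \in A ->
  x \notin alt_vertices a Q Q' ->
  alt_path A a b (cons_fn x (fun j => s j.+1)) t
    (cons_fn (x :: Q 0) (fun j => Q j.+1)) Q'.
Proof.
move=> a0 [h1 h2 h3 h4 h5] hx hxn; split.
- move=> [|i] hi //=; last by apply: h1.
  apply: dpath_cons hx _ (h1 0 a0).
  by apply: contra hxn; rewrite altE mem_cat => ->.
- by move=> [|i] hi //=; apply: h2.
- by move=> [|i] hi0 hi //=; apply: h3.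
- exact: h4.
- by rewrite /= hxn.
Qed.

Definition Res A (W : {set V}) (v0 lst : V) (a b c : nat) : Prop :=
  exists (s t : nat -> V) (Q Q' : nat -> seq V),
    [/\ alt_path A a b s t Q Q', c <= plen (Q 0), (1 < a -> b <= plen (Q a.-1)),
        s 0 = v0 & t a.-1 = lst /\ {subset alt_vertices a Q Q' <= W}].

Lemma Res_weaken A W v0 lst a b c c' : c' <= c -> Res A W v0 lst a b c -> Res A W v0 lst a b c'.
Proof.
move=> hc [s [t [Q [Q' [h1 h2 h3 h4 h5]]]]].
by exists s, t, Q, Q'; split => //; apply: leq_trans hc h2.
Qed.

End Alt.


Section Main.
Variable V : finType.

Definition Wset (v0 : V) (vs : seq V) (A2 : {set V * V}) (VG : V * V -> {set V}) : {set V} :=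
  [set x in v0 :: vs] :|: \bigcup_(e in A2) VG e.

Lemma tail_arc (v0 v1 : V) vs (A2 : {set V * V}) e :
  A2 \subset arcs_of (v0 :: v1 :: vs) -> e \in A2 -> e != (v0, v1) ->
  e \in arcs_of (v1 :: vs).
Proof.
move=> hsub eA ne; have := subsetP hsub e eA.
by rewrite arcs_of_cons2 in_setU1 (negbTE ne).
Qed.

Lemma chain_tail b (v0 v1 : V) vs A2 VG AG :
  is_chain b v0 (v1 :: vs) A2 VG AG -> is_chain b v1 vs (A2 :\ (v0, v1)) VG AG.
Proof.
case=> hu hsub hg hp; split.
- by case/andP: hu.
- apply/subsetP => e; rewrite in_setD1 => /andP [ne eA].
  exact: tail_arc hsub eA ne.
- move=> e; rewrite in_setD1 => /andP [ne eA]; have [h1 h2] := hg e eA; split => //.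
  have [m1 m2] := arcs_of_mem (tail_arc hsub eA ne).
  apply/setP => x; apply/idP/idP.
  + rewrite in_setI in_set => /andP [xt xg].
    by rewrite -h1 in_setI in_set xg andbT in_cons xt orbT.
  + move=> hx; have := hx; rewrite -h1 in_setI => /andP [_ xg].
    rewrite in_setI xg andbT in_set; move: hx.
    by rewrite !inE => /orP [/eqP -> | /eqP ->].
- move=> e f; rewrite !in_setD1 => /andP [ne eA] /andP [_ fA] nef.
  apply/subsetP => x xef; have xs := subsetP (hp e f eA fA nef) x xef.
  move: xef; rewrite in_setI => /andP [xe _].
  have [h1 _] := hg e eA.
  have : x \in [set e.1; e.2] by rewrite -h1 in_setI xs xe.
  have [m1 m2] := arcs_of_mem (tail_arc hsub eA ne).
  by rewrite in_set => /set2P [-> | ->].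
Qed.

End Main.


Lemma ar1 b n : 0 < b -> 4 * b ^ 2 <= n.+1 -> b <= n.
Proof. move=> hb h; have bb : b <= b * b by rewrite leq_pmulr. rewrite -mulnn in h; lia. Qed.
Lemma ar2 b n : 0 < b -> 2 * b ^ 2 + b - 2 <= n -> b <= n.
Proof. move=> hb h; have bb : b <= b * b by rewrite leq_pmulr. rewrite -mulnn in h; lia. Qed.
Lemma ar3 b n : 0 < b -> 2 * b - 1 <= n -> b <= n.
Proof. lia. Qed.

Section Key.
Variable V : finType.

Lemma key b : 0 < b -> forall (vs : seq V) (v0 : V) A2 VG AG,
  is_chain b v0 vs A2 VG AG ->
  forall a c, 0 < a -> a.-1 * b.+1 + c <= #|A2| ->
  Res (chain_arcs v0 vs A2 AG) (Wset v0 vs A2 VG) v0 (last v0 vs) a b c.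
Proof.
move=> hb vs; elim: vs => [|v1 vs IH] v0 A2 VG AG hch a c a0 hc.
  case: hch => _ hsub _ _.
  have A20 : A2 = set0 by apply/eqP; rewrite -subset0 -(arcs_of1 v0).
  rewrite A20 cards0 in hc.
  have a1 : a = 1.
    case: a a0 hc => [|[|a]] //= _; rewrite mulSn; lia.
  subst a; have c0 : c = 0 by lia.
  subst c.
  exists (fun _ => v0), (fun _ => v0), (fun _ => [:: v0]), (fun _ => [::]).
  split => //.
    by split => // i _; exact: dpath1.
  split => // x; rewrite /= inE => /eqP ->.
  by rewrite /Wset in_setU in_set mem_head.
case: (hch) => hu hsub hg hp.
have htail := chain_tail hch.
set A2' := A2 :\ (v0, v1).
set Full := chain_arcs v0 (v1 :: vs) A2 AG.
set W := Wset v0 (v1 :: vs) A2 VG.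
set W' := Wset v1 vs A2' VG.
have hW : W' \subset W.
  apply/subsetP => x; rewrite /W /W' /Wset !in_setU !in_set.
  move=> /orP [xs | /bigcupP [e eA xe]]; first by rewrite in_cons xs orbT.
  apply/orP; right; apply/bigcupP; exists e => //.
  by move: eA; rewrite in_setD1 => /andP [].
have hA : chain_arcs v1 vs A2' AG \subset Full.
  rewrite /Full /chain_arcs; apply: setUSS; first exact: arcs_of_consS.
  apply/subsetP => x /bigcupP [e eA xe]; apply/bigcupP; exists e => //.
  by move: eA; rewrite in_setD1 => /andP [].
have v0n : v0 \notin v1 :: vs by case/andP: hu.
have hv0 : v0 \notin W'.
  rewrite /W' /Wset in_setU in_set negb_or v0n /=.
  apply/bigcupP => -[e eA xe]; move: eA; rewrite in_setD1 => /andP [ne eA].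
  have [m1 m2] := arcs_of_mem (tail_arc hsub eA ne).
  have [h1 _] := hg e eA.
  have : v0 \in [set e.1; e.2] by rewrite -h1 in_setI in_set mem_head xe.
  by move/set2P => [E | E]; [move: m1 | move: m2]; rewrite -E (negbTE v0n).
have he0 : (v0, v1) \in Full.
  by rewrite /Full /chain_arcs in_setU arcs_of_cons2 setU11.
have Hpre : forall c', a.-1 * b.+1 + c' <= #|A2'| ->
    Res Full W v0 (last v0 (v1 :: vs)) a b c'.+1.
  move=> c' hc'; have [s [t [Q [Q' [h1 h2 h3 h4 [h5 h6]]]]]] := IH _ _ _ _ htail a c' a0 hc'.
  have h1' := alt_mono hA h1.
  have d0 : dpath Full v1 (t 0) (Q 0) by case: h1' => d _ _ _ _; rewrite -h4; exact: d.
  exists (cons_fn v0 (fun j => s j.+1)), t, (cons_fn (v0 :: Q 0) (fun j => Q j.+1)), Q'.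
  split.
  - apply: alt_prepend => //; first by rewrite h4.
    by apply: contra hv0 => /h6.
  - by move: h2; rewrite /plen /= (dpath_head d0).
  - move=> a1; have [m hm] : exists m, a.-1 = m.+1 by exists a.-2; lia.
    by move: (h3 a1); rewrite hm.
  - by [].
  - split; first by rewrite h5.
    move=> x; rewrite (_ : alt_vertices a _ Q' = v0 :: alt_vertices a Q Q') //.
    rewrite in_cons => /orP [/eqP -> | /h6 /(subsetP hW) //].
    by rewrite /W /Wset in_setU in_set mem_head.
case he0A : ((v0, v1) \in A2); last first.
  have hcard : #|A2| = #|A2'| by rewrite (cardsD1 (v0, v1)) he0A.
  by apply: Res_weaken (Hpre c _) => //; rewrite -hcard.
have hcard : #|A2| = #|A2'|.+1 by rewrite (cardsD1 (v0, v1)) he0A.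
case: c hc => [|c] hc; last by apply: Hpre; lia.
case: a a0 hc Hpre => [|[|n]] // _ hc Hpre.
  by apply: Res_weaken (Hpre 0 _).
have hcn : n * b.+1 + b <= #|A2'| by move: hc; rewrite mulSn hcard; lia.
have [s [t [Q [Q' [h1 h2 h3 h4 [h5 h6]]]]]] := IH _ _ _ _ htail n.+1 b isT hcn.
have h1' := alt_mono hA h1.
have d0 : dpath Full v1 (t 0) (Q 0) by case: h1' => d _ _ _ _; rewrite -h4; exact: d.
have eQ0 := dpath_head d0.
have [hVG hty] := hg _ he0A.
have hdisj : forall x, x \in VG (v0, v1) -> x \in W' -> x = v1.
  move=> x xg xW.
  have xt : x \in v1 :: vs.
    move: xW; rewrite /W' /Wset in_setU in_set => /orP [// | /bigcupP [f fA xf]].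
    move: fA; rewrite in_setD1 => /andP [nf fA].
    have [m1 m2] := arcs_of_mem (tail_arc hsub fA nf).
    have xs : x \in [set x in v0 :: v1 :: vs].
      by apply: (subsetP (hp f _ fA he0A nf)); rewrite in_setI xf xg.
    have [hVf _] := hg f fA.
    have : x \in [set f.1; f.2] by rewrite -hVf in_setI xs xf.
    by move/set2P => [-> | ->].
  have : x \in [set v0; v1] by rewrite -hVG in_setI in_set in_cons xt orbT xg.
  move/set2P => [E | //]; by rewrite -E xt in v0n.
have hAG : AG (v0, v1) \subset Full.
  by rewrite /Full /chain_arcs; apply: subset_trans (bigcup_sup _ he0A) (subsetUr _ _).
have hVGW : VG (v0, v1) \subset W.
  by rewrite /W /Wset; apply: subset_trans (bigcup_sup _ he0A) (subsetUr _ _).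
have hold_u : uniq (alt_vertices n.+1 Q Q') by case: h1.
have hold_u' : uniq (v1 :: (behead (Q 0) ++ altF n.+1 Q Q')).
  by move: hold_u; rewrite altE {1}eQ0.
have hold_W : {subset v1 :: (behead (Q 0) ++ altF n.+1 Q Q') <= W'}.
  by move=> x hx; apply: h6; rewrite altE eQ0.
have fin : forall S1 T0 Q0 Q'0 Q1, dpath Full v0 T0 Q0 -> dpath Full S1 T0 Q'0 ->
    b <= plen Q'0 -> dpath Full S1 (t 0) Q1 -> b <= plen Q1 ->
    {subset behead Q1 <= alt_vertices n.+1 Q Q'} ->
    {subset Q0 ++ behead (rev Q'0) <= VG (v0, v1)} ->
    uniq ((Q0 ++ behead (rev Q'0)) ++ (behead Q1 ++ altF n.+1 Q Q')) ->
    Res Full W v0 (last v0 (v1 :: vs)) n.+2 b 0.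
  move=> S1 T0 Q0 Q'0 Q1 dQ0 dQ'0 lQ'0 dQ1 lQ1 sQ1 sG uG.
  exists (cons_fn v0 (cons_fn S1 (fun j => s j.+1))), (cons_fn T0 t),
    (cons_fn Q0 (cons_fn Q1 (fun j => Q j.+1))), (cons_fn Q'0 Q').
  split => //.
  - by apply: alt_combine => //; move: uG; rewrite -!catA.
  - move=> _ /=; case: (n) h3 => [|m] h3' //=; exact: h3'.
  - split; first by rewrite /= h5.
    move=> x; rewrite altE altF_cons // mem_cat => /orP [xQ0 | ].
      by apply: (subsetP hVGW); apply: sG; rewrite mem_cat xQ0.
    rewrite -catA mem_cat => /orP [xQ'0 | ].
      by apply: (subsetP hVGW); apply: sG; rewrite mem_cat xQ'0 orbT.
    rewrite mem_cat => /orP [/sQ1 | xF]; first by move/h6/(subsetP hW).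
    by apply: (subsetP hW); apply: h6; rewrite altE mem_cat xF orbT.
have finA : forall T0 Q0 Q'0, dpath Full v0 T0 Q0 -> dpath Full v1 T0 Q'0 ->
    b <= plen Q'0 -> uniq (Q0 ++ behead (rev Q'0)) ->
    {subset Q0 ++ behead (rev Q'0) <= VG (v0, v1)} ->
    Res Full W v0 (last v0 (v1 :: vs)) n.+2 b 0.
  move=> T0 Q0 Q'0 dQ0 dQ'0 lQ'0 uG sG.
  apply: (fin v1 T0 Q0 Q'0 (Q 0)) => //.
    by move=> x /mem_behead xQ; rewrite altE mem_cat xQ.
  apply: uniq_catx uG hold_u' _ => y yG yL.
  exact: hdisj (sG y yG) (hold_W y yL).
rewrite /= in hty.
case: hty => [[c' [uc lc sz eV eA]] | [r [P1 [dP1 lP1 qP1 eV eA]]] |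
              [r [P1 [P2 [[ne [dP1 dP2]] eI [l1 l2] eV eA]]]]].
-
  have eG : [:: v0] ++ behead (rev (v1 :: c')) = rev (v1 :: c').
    by rewrite {2}rev_last lc.
  apply: (finA v0 [:: v0] (v1 :: c')).
  + exact: dpath1.
  + exists c'; split => //.
    apply: sub_path (path_arcs v1 c') => u w /= h.
    apply: (subsetP hAG); rewrite eA -cats1.
    exact: (subsetP (arcs_of_catl _ _)) h.
  + exact: ar1 hb sz.
  + by rewrite eG rev_uniq.
  + by move=> x; rewrite eG mem_rev eV in_set.
-
  have eP1 := dpath_head dP1.
  have rP1 : r \in P1 by rewrite eP1 mem_head.
  have eG : [:: v0] ++ behead (rev P1) = rev P1.
    by rewrite eP1 {2}rev_last (dpath_last dP1).
  have rVG : r \in VG (v0, v1) by rewrite eV in_setU1 in_set rP1 orbT.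
  apply: (fin r v0 [:: v0] P1 (r :: Q 0)).
  + exact: dpath1.
  + apply: dpath_mono dP1; apply: subset_trans hAG; rewrite eA; exact: subsetUl.
  + exact: ar2 hb lP1.
  + apply: dpath_cons d0.
      apply: (subsetP hAG); rewrite eA in_setU; apply/orP; right.
      exact: (imset_f (fun x => (x, v1)) rP1).
    apply/negP => rQ.
    have rW : r \in W' by apply: h6; rewrite altE mem_cat rQ.
    by move: qP1; rewrite -(hdisj r rVG rW) rP1.
  + by move: h2; rewrite /plen /= => /leq_trans; apply; exact: leq_pred.
  + by move=> x /= xQ; rewrite altE mem_cat xQ.
  + by move=> x; rewrite eG mem_rev eV in_setU1 in_set => ->; rewrite orbT.
  + rewrite eG /= -altE cat_uniq rev_uniq (dpath_uniq dP1) hold_u andbT /=.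
    apply/hasPn => y yold; apply/negP; rewrite mem_rev => yP1.
    have yW : y \in W' by apply: h6.
    have yVG : y \in VG (v0, v1) by rewrite eV in_setU1 in_set yP1 orbT.
    by move: qP1; rewrite -(hdisj y yVG yW) yP1.
-
  have eP2 := dpath_head dP2.
  have eR : rev P2 = r :: behead (rev P2).
    by rewrite {1}eP2 rev_last (dpath_last dP2) -eP2.
  have sub1 : arcs_of P1 \subset Full.
    apply: subset_trans hAG; rewrite eA; apply/subsetP => x hx.
    by rewrite in_setU1 in_setU hx orbT.
  have sub2 : arcs_of P2 \subset Full.
    apply: subset_trans hAG; rewrite eA; apply/subsetP => x hx.
    by rewrite in_setU1 in_setU hx !orbT.
  apply: (finA r P1 P2).
  + exact: dpath_mono sub1 dP1.
  + exact: dpath_mono sub2 dP2.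
  + exact: ar3 hb l2.
  + apply: (uniq_catx (x:=r)) (dpath_uniq dP1) _ _; first by rewrite -eR rev_uniq (dpath_uniq dP2).
    move=> y yP1; rewrite -eR mem_rev => yP2.
    have : y \in [set x in P1] :&: [set x in P2] by rewrite in_setI !in_set yP1 yP2.
    by rewrite eI in_set1 => /eqP.
  + move=> x; rewrite mem_cat eV in_setU !in_set => /orP [-> // | /mem_behead].
    by rewrite mem_rev => ->; rewrite orbT.
Qed.

End Key.


Unset Implicit Arguments.

Theorem lemma2p7 (V : finType) (a b : nat) (v0 : V) (vs : seq V)
    (A2 : {set V * V}) (VG : V * V -> {set V}) (AG : V * V -> {set V * V}) :
  1 <= a -> 1 <= b ->
  is_chain b v0 vs A2 VG AG ->
  a * (b + 1) - 1 <= #|A2| ->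
  exists (s t : nat -> V) (Q Q' : nat -> seq V),
    [/\ strong_alt_path (chain_arcs v0 vs A2 AG) a b s t Q Q',
        s 0 = v0 & t a.-1 = last v0 vs].
Proof.
move=> a1 b1 hch hc.
have hc' : a.-1 * b.+1 + b <= #|A2|.
  by case: a a1 hc => [|n] // _; rewrite mulSn addn1 /=; lia.
have [s [t [Q [Q' [h1 h2 h3 h4 [h5 _]]]]]] := key b1 hch a1 hc'.
exists s, t, Q, Q'; split => //; split => //.
have [ea|a2] := eqVneq a 1; first by rewrite ea.
by apply: h3; move: a1 a2; clear; lia.
Qed.
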